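(* Consider the one-stage ANC game described in the context. Suppose that for every $x\in\mathbb{R}^n$ and $a\in\mathcal{A}$ the functions $u\mapsto\Sigma(F(x,0),u,a)$ and $u\mapsto\Sigma(F(x,u),u,a)$ are continuous, coercive and convex on $\mathbb{R}^m$, and that for every $x\in\mathbb{R}^n$, $s\in\mathcal{F}$ the function $H(u)\triangleq h^{x,s}(u)=[h^{x,s}_1(u),\dots,h^{x,s}_N(u)]'$ satisfies: there exist $u^*\in\mathbb{R}^m$ and a set $\mathcal{G}\subset\mathcal{A}$ with $|\mathcal{G}|\ge2$ such that (a) $H_i(u^* )=\max_{1\le j\le N}H_j(u^* )$ for all $i\in\mathcal{G}$; (b) for all $u\ne u^*$ there exists $i\in\mathcal{G}$ with $H_i(u)>H_i(u^* )$; (c) $u^*$ is not a minimum of any $H_i$, $i\in\mathcal{G}$. Then the one-stage ANC game has a non-pure saddle point $(u^*,p^* )$.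
   Context: Setting (one-stage ANC game). Let $\mathcal{F}=\{1,\dots,|\mathcal{F}|\}$ be a finite set of transmission regimes and $\mathcal{A}=\{1,\dots,N\}$ a finite set of jammer actions. For each $a\in\mathcal{A}$ let $P(a)$ be an $|\mathcal{F}|\times|\mathcal{F}|$ row-stochastic matrix, and let $q=(q_1,\dots,q_{|\mathcal{F}|})'\in[0,1]^{|\mathcal{F}|}$. Let $F:\mathbb{R}^n\times\mathbb{R}^m\to\mathbb{R}^n$, $\sigma^0:\mathbb{R}^n\times\mathbb{R}^m\to\mathbb{R}$, $\sigma^1:\mathbb{R}^n\to\mathbb{R}$, $g^0:\mathcal{A}\times\mathcal{F}\to\mathbb{R}$. For a plant state $x$ and regime $s$, the controller chooses $u\in\mathbb{R}^m$, the jammer chooses $p\in\mathcal{S}_{N-1}$ (unit simplex in $\mathbb{R}^N$); $a$ is drawn according to $p$, $s^+$ with $\mathrm{Pr}(s^+=i)=P_{si}(a)$, $b\in\{0,1\}$ with $\mathrm{Pr}(b=1\mid s^+)=q_{s^+}$, and $x^+=F(x,bu)$. Payoff $\Sigma(x^+,u,a)=\sigma^0(x,u)+\sigma^1(x^+)-g^0(a,s)$, with expectation $p'h^{x,s}(u)$ where $h^{x,s}_i(u)=(P(i)q)_s\Sigma(F(x,u),u,i)+(1-(P(i)q)_s)\Sigma(F(x,0),u,i)$. A saddle point is $(u^*,p^* )\in\mathbb{R}^m\times\mathcal{S}_{N-1}$ with $p'h^{x,s}(u^* )\le(p^* )'h^{x,s}(u^* )\le(p^* )'h^{x,s}(u)$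 for all $u,p$ (hence $(p^* )'h^{x,s}(u^* )=\inf_u\sup_pp'h^{x,s}(u)=\sup_p\inf_up'h^{x,s}(u)$). It is non-pure if $p^*$ has at least two positive components. A function $h:\mathbb{R}^m\to\mathbb{R}$ is coercive if $h(u)\ge\eta(\|u\|)$ for some $\eta$ with $\eta(y)\to+\infty$ as $y\to+\infty$. *)

(* Defs.v *)
From HB Require Import structures.
From mathcomp Require Import all_boot all_order all_algebra.
From mathcomp Require Import all_classical all_reals all_analysis.
Set Implicit Arguments. Unset Strict Implicit. Unset Printing Implicit Defensive.
Import Order.TTheory GRing.Theory Num.Theory.
Import numFieldNormedType.Exports.
Local Open Scope ring_scope.
Local Open Scope classical_set_scope.

(* Regimes F = 'I_K, jammer actions A = 'I_N. *)

Definition row_stochastic (R : realType) (K : nat) (M : 'M[R]_K) : Prop :=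
  (forall i j, 0 <= M i j) /\ (forall i, \sum_j M i j = 1).

Definition in_simplex (R : realType) (N : nat) (p : 'I_N -> R) : Prop :=
  (forall i, 0 <= p i) /\ \sum_i p i = 1.

Definition coercive (R : realType) (m : nat) (h : 'rV[R]_m -> R) : Prop :=
  exists eta : R -> R, (eta @ +oo --> +oo) /\ (forall u, eta `|u| <= h u).

Definition convex_fun (R : realType) (m : nat) (h : 'rV[R]_m -> R) : Prop :=
  forall (u v : 'rV[R]_m) (t : R), 0 <= t -> t <= 1 ->
    h (t *: u + (1 - t) *: v) <= t * h u + (1 - t) * h v.

Definition Sigma (R : realType) (n m K N : nat)
  (sigma0 : 'rV[R]_n -> 'rV[R]_m -> R) (sigma1 : 'rV[R]_n -> R)
  (g0 : 'I_N -> 'I_K -> R) (x : 'rV[R]_n) (s : 'I_K)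
  (xp : 'rV[R]_n) (u : 'rV[R]_m) (a : 'I_N) : R :=
  sigma0 x u + sigma1 xp - g0 a s.

Definition Pq (R : realType) (K N : nat) (P : 'I_N -> 'M[R]_K) (q : 'I_K -> R)
  (i : 'I_N) (s : 'I_K) : R := \sum_j P i s j * q j.

Definition hxs (R : realType) (n m K N : nat)
  (P : 'I_N -> 'M[R]_K) (q : 'I_K -> R) (F : 'rV[R]_n -> 'rV[R]_m -> 'rV[R]_n)
  (sigma0 : 'rV[R]_n -> 'rV[R]_m -> R) (sigma1 : 'rV[R]_n -> R)
  (g0 : 'I_N -> 'I_K -> R) (x : 'rV[R]_n) (s : 'I_K)
  (u : 'rV[R]_m) (i : 'I_N) : R :=
  Pq P q i s * Sigma sigma0 sigma1 g0 x s (F x u) u i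
  + (1 - Pq P q i s) * Sigma sigma0 sigma1 g0 x s (F x 0) u i.

Definition expected (R : realType) (m N : nat) (H : 'rV[R]_m -> 'I_N -> R)
  (p : 'I_N -> R) (u : 'rV[R]_m) : R := \sum_i p i * H u i.

Definition saddle_point (R : realType) (m N : nat) (H : 'rV[R]_m -> 'I_N -> R)
  (us : 'rV[R]_m) (ps : 'I_N -> R) : Prop :=
  in_simplex ps /\
  (forall p, in_simplex p -> expected H p us <= expected H ps us) /\
  (forall u, expected H ps us <= expected H ps u).

Definition non_pure (R : realType) (N : nat) (p : 'I_N -> R) : Prop :=
  exists i j : 'I_N, i != j /\ 0 < p i /\ 0 < p j.

(* Main.v *)
Require Import Defs.
From HB Require Import structures.
From mathcomp Require Import all_boot all_order all_algebra.
From mathcomp Require Import all_classical all_reals all_analysis.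
From mathcomp Require Import ring lra.
Import Order.TTheory GRing.Theory Num.Theory.
Import numFieldNormedType.Exports.
Local Open Scope ring_scope.

Section Lam.
Variables (R : realType) (m : nat) (f g : 'rV[R]_m -> R) (Q : 'rV[R]_m -> Prop).
Hypotheses (cf : convex_fun f) (cg : convex_fun g)
 (cQ : forall u v t, 0 <= t -> t <= 1 -> Q u -> Q v -> Q (t *: u + (1-t) *: v))
 (hyp : forall u, Q u -> 0 <= f u \/ 0 <= g u).

Let good l u := Q u /\ l * f u + (1 - l) * g u < 0.

Lemma comb l u1 u2 : 0 <= l -> l <= 1 -> good l u1 -> good l u2 ->
  0 <= f u1 - g u1 -> f u2 - g u2 <= 0 -> False.
Proof.
move=> l0 l1 [Q1 s1] [Q2 s2] d1 d2.
have [dd|dd] := eqVneq (f u1 - g u1 - (f u2 - g u2)) 0.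
  have e1 : f u1 = g u1 by lra.
  have e2 : l * f u1 + (1 - l) * g u1 = g u1 by rewrite e1; ring.
  have := hyp _ Q1; lra.
set th := - (f u2 - g u2) / (f u1 - g u1 - (f u2 - g u2)).
have eth : th * (f u1 - g u1 - (f u2 - g u2)) = - (f u2 - g u2).
  by rewrite /th mulrVK // unitfE.
have Dp : 0 < f u1 - g u1 - (f u2 - g u2) by rewrite lt0r dd /=; lra.
have th0 : 0 <= th by nra.
have th1 : th <= 1 by nra.
have Qu := cQ _ _ _ th0 th1 Q1 Q2.
have hf := cf u1 u2 th th0 th1.
have hg := cg u1 u2 th th0 th1.
have AB : th * f u1 + (1 - th) * f u2 = th * g u1 + (1 - th) * g u2.
  apply/eqP; rewrite -subr_eq0; apply/eqP.
  transitivity (th * (f u1 - g u1 - (f u2 - g u2)) + (f u2 - g u2)); first ring.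
  by rewrite eth; ring.
have S : l * (th * f u1 + (1 - th) * f u2) + (1 - l) * (th * g u1 + (1 - th) * g u2) < 0.
  have -> : l * (th * f u1 + (1 - th) * f u2) + (1 - l) * (th * g u1 + (1 - th) * g u2)
    = th * (l * f u1 + (1 - l) * g u1) + (1 - th) * (l * f u2 + (1 - l) * g u2) by ring.
  have [t0|t0] := eqVneq th 0.
    by rewrite t0 mul0r add0r subr0 mul1r.
  have tp : 0 < th by rewrite lt0r t0.
  have : th * (l * f u1 + (1 - l) * g u1) < 0 by rewrite pmulr_rlt0.
  have : (1 - th) * (l * f u2 + (1 - l) * g u2) <= 0.
    by rewrite mulr_ge0_le0 //; [lra | apply: ltW].
  lra.
set A := th * f u1 + (1 - th) * f u2 in hf AB S.
set B := th * g u1 + (1 - th) * g u2 in hg AB S.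
have e3 : l * A + (1 - l) * B = A by rewrite -AB; ring.
have := hyp _ Qu; lra.
Qed.

Lemma lam_exists : exists l, 0 <= l /\ l <= 1 /\ forall u, Q u -> 0 <= l * f u + (1 - l) * g u.
Proof.
apply: contrapT => Hn.
have W : forall l, 0 <= l -> l <= 1 -> exists u, good l u.
  move=> l l0 l1; apply: contrapT => Hu; apply: Hn; exists l; split=> //; split=> // u Qu.
  rewrite leNgt; apply/negP => lt; apply: Hu; by exists u.
pose E : set R := fun l => 0 <= l /\ l <= 1 /\ exists u, good l u /\ 0 < f u - g u.
have E0 : E 0.
  have [u [Qu su]] := W 0 (lexx _) ler01.
  split; first exact: lexx. split; first exact: ler01.
  exists u; split => //.
  rewrite ltNge; apply/negP => d; have := hyp _ Qu; lra.
have hs : has_sup E.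
  split; first by exists 0.
  by exists 1 => l [_ [] ].
have ub := sup_upper_bound hs.
set c := sup E in ub.
have c0 : 0 <= c by apply: ub.
have c1 : c <= 1.
  apply: ge_sup; first by exists 0.
  by move=> l [_ []].
have [u [Qu su]] := W c c0 c1.
have [dp|dn] := ltrP 0 (f u - g u).
  have [an|ap] := ltrP (f u) 0.
    have E1 : E 1.
      split; first exact: ler01. split; first exact: lexx.
      by exists u; split => //; split => //; lra.
    have [c1'|c1'] := eqVneq c 1.
      by have := hyp _ Qu; rewrite c1' in su; lra.
    have := ub 1 E1; rewrite -/c => h.
    have := hyp _ Qu; lra.
  set e := - (c * f u + (1 - c) * g u) / (2 * (f u - g u)).
  have ee : e * (2 * (f u - g u)) = - (c * f u + (1 - c) * g u).
    by rewrite /e mulrVK // unitfE; apply/lt0r_neq0; lra.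
  have e0 : 0 < e by nra.
  have e1 : e <= 1 - c by nra.
  have El : E (c + e).
    split; first lra. split; first lra.
    exists u; split => //; split => //; nra.
  have := ub _ El; lra.
move: su dn; set s := c * f u + (1 - c) * g u; set d := f u - g u => su dn.
have dl : 0 < - s / (1 - d) by apply: divr_gt0; lra.
have [l El lt] := sup_adherent dl hs.
rewrite -/c in lt.
have lc : l <= c by apply: ub.
have [l0 [l1 [v [[Qv sv] dv]]]] := El.
have ed : - s / (1 - d) * (1 - d) = - s by rewrite mulrVK // unitfE; apply/lt0r_neq0; lra.
have gl : good l u.
  split => //.
  have : (c - l) * (- d) <= - s / (1 - d) * (- d) by apply: ler_wpM2r; lra.
  have id1 : l * f u + (1 - l) * g u = s + (c - l) * (- d) by rewrite /s /d; ring.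
  have id2 : - s / (1 - d) * (- d) = - s / (1 - d) * (1 - d) - - s / (1 - d) by ring.
  rewrite id1 ed in id2 *; lra.
have gv : good l v by split.
exact: (comb _ _ _ l0 l1 gv gl (ltW dv) dn).
Qed.
End Lam.
Lemma sum2 (R : realType) N (F : 'I_N -> R) i j : i != j ->
  \sum_l F l = F i + F j + \sum_(l | (l != i) && (l != j)) F l.
Proof.
move=> ij; rewrite (bigD1 i) //= (bigD1 j) //=; last by rewrite eq_sym.
by rewrite addrA.
Qed.
Arguments sum2 {R N} F {i j}.

Lemma conv_comb (R : realType) m (f g : 'rV[R]_m -> R) a b c :
  0 <= a -> 0 <= b -> convex_fun f -> convex_fun g ->
  convex_fun (fun u => a * f u + b * g u + c).
Proof.
move=> a0 b0 cf cg u v t t0 t1.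
have hf := cf u v t t0 t1; have hg := cg u v t t0 t1.
have h1 : a * f (t *: u + (1 - t) *: v) <= a * (t * f u + (1 - t) * f v) by apply: ler_wpM2l.
have h2 : b * g (t *: u + (1 - t) *: v) <= b * (t * g u + (1 - t) * g v) by apply: ler_wpM2l.
have -> : t * (a * f u + b * g u + c) + (1 - t) * (a * f v + b * g v + c) =
  a * (t * f u + (1 - t) * f v) + b * (t * g u + (1 - t) * g v) + c by ring.
lra.
Qed.

Lemma key (R : realType) m N k : forall (G : {set 'I_N}) (f : 'I_N -> 'rV[R]_m -> R),
  #|G| = k.+1 -> (forall i, i \in G -> convex_fun (f i)) ->
  (forall u, exists i, i \in G /\ 0 <= f i u) ->
  exists p : 'I_N -> R, (forall i, 0 <= p i) /\ (forall i, i \notin G -> p i = 0) /\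
    \sum_i p i = 1 /\ forall u, 0 <= \sum_i p i * f i u.
Proof.
elim: k => [|k IH] G f cG conv hyp.
  have [i Gi] := cards1P (introT eqP cG).
  exists (fun l => (l == i)%:R); split; first by move=> l; apply: ler0n.
  split; first by move=> l; rewrite Gi inE => /negbTE ->.
  have E (F : 'I_N -> R) : \sum_l (l == i)%:R * F l = F i.
    rewrite (bigD1 i) //= eqxx mul1r big1 ?addr0 // => l /negbTE ->; by rewrite mul0r.
  split; first by have := E (fun _ => 1); under eq_bigr do rewrite mulr1.
  move=> u; rewrite E.
  have [l [lG fl]] := hyp u; move: lG; rewrite Gi inE => /eqP <-; exact: fl.
have [i iG] : exists i, i \in G.
  by apply/set0Pn; rewrite -cards_eq0 cG.
have [j jG] : exists j, j \in G :\ i.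
  have h : #|G :\ i| = k.+1 by move: cG; rewrite (cardsD1 i G) iG add1n => -[].
  by apply/set0Pn; rewrite -cards_eq0 h.
move: jG; rewrite !inE => /andP [ji jG].
pose Q u := forall l, l \in G -> l != i -> l != j -> f l u < 0.
have cQ : forall u v t, 0 <= t -> t <= 1 -> Q u -> Q v -> Q (t *: u + (1-t) *: v).
  move=> u v t t0 t1 Qu Qv l lG li lj.
  have := conv l lG u v t t0 t1; have := Qu l lG li lj; have := Qv l lG li lj.
  move=> h1 h2 h3.
  have [t00|t00] := eqVneq t 0.
    move: h3; rewrite t00 mul0r add0r subr0 mul1r; lra.
  have tp : 0 < t by rewrite lt0r t00.
  have : t * f l u < 0 by rewrite pmulr_rlt0.
  have : (1 - t) * f l v <= 0 by rewrite mulr_ge0_le0 //; [lra | apply: ltW].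
  lra.
have hypQ : forall u, Q u -> 0 <= f i u \/ 0 <= f j u.
  move=> u Qu; have [l [lG fl]] := hyp u.
  have [li|li] := eqVneq l i; first by left; rewrite -li.
  have [lj|lj] := eqVneq l j; first by right; rewrite -lj.
  by have := Qu l lG li lj; lra.
have [lam [l0 [l1 hl]]] := @lam_exists _ _ _ _ _ (conv i iG) (conv j jG) cQ hypQ.
pose f' l := if l == i then (fun u => lam * f i u + (1 - lam) * f j u) else f l.
have cG' : #|G :\ j| = k.+1.
  by move: cG; rewrite (cardsD1 j G) jG => -[].
have conv' : forall l, l \in G :\ j -> convex_fun (f' l).
  move=> l; rewrite !inE => /andP [lj lG]; rewrite /f'.
  case: eqP => _; last exact: conv.
  have l1' : 0 <= 1 - lam by lra.
  have H := @conv_comb _ _ _ _ _ _ 0 l0 l1' (conv i iG) (conv j jG).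
  move=> u v t t0 t1; have := H u v t t0 t1; rewrite !addr0; exact.
have hyp' : forall u, exists l, l \in G :\ j /\ 0 <= f' l u.
  move=> u; case: (pselect (Q u)) => Qu.
    have ij : i != j by rewrite eq_sym.
    exists i; rewrite !inE ij iG /f' eqxx; split => //; exact: hl.
  have : exists l, ~ (l \in G -> l != i -> l != j -> f l u < 0).
    by apply/existsNP.
  move=> [l Hl].
  have lG : l \in G by apply: contrapT => H; apply: Hl => /H.
  have li : l != i by apply: contrapT => /negP /negbNE H; apply: Hl => _ /negP.
  have lj : l != j by apply: contrapT => /negP /negbNE H; apply: Hl => _ _ /negP.
  exists l; rewrite !inE lj lG /f' (negbTE li); split => //.
  rewrite leNgt; apply/negP => H; apply: Hl => _ _ _; exact: H.
have [p [p0 [pG [p1 pu]]]] := IH _ _ cG' conv' hyp'.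
have pj : p j = 0 by apply: pG; rewrite !inE eqxx.
exists (fun l => if l == i then lam * p i else if l == j then (1 - lam) * p i else p l).
split.
  move=> l; case: eqP => _; first by apply: mulr_ge0.
  case: eqP => _ //; apply: mulr_ge0 => //; lra.
split.
  move=> l lG; have li : l != i by apply: contraNneq lG => ->.
  have lj : l != j by apply: contraNneq lG => ->.
  rewrite (negbTE li) (negbTE lj); apply: pG; by rewrite !inE negb_and lG orbT.
have ij : i != j by rewrite eq_sym.
split.
  rewrite (sum2 _ ij) eqxx (negbTE ji) eqxx -[X in _ = X]p1 (sum2 p ij) pj.
  have -> : \sum_(l | (l != i) && (l != j))
     (if l == i then lam * p i else if l == j then (1 - lam) * p i else p l) =
     \sum_(l | (l != i) && (l != j)) p l.
    by apply: eq_bigr => l /andP [/negbTE -> /negbTE ->].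
  ring.
move=> u; rewrite (sum2 _ ij) eqxx (negbTE ji) eqxx.
have := pu u; rewrite (sum2 _ ij) pj mul0r addr0.
have -> : f' i u = lam * f i u + (1 - lam) * f j u by rewrite /f' eqxx.
have -> : \sum_(l | (l != i) && (l != j)) p l * f' l u = \sum_(l | (l != i) && (l != j)) p l * f l u.
  by apply: eq_bigr => l /andP [/negbTE li _]; rewrite /f' li.
have -> : \sum_(l | (l != i) && (l != j))
     (if l == i then lam * p i else if l == j then (1 - lam) * p i else p l) * f l u =
     \sum_(l | (l != i) && (l != j)) p l * f l u.
  by apply: eq_bigr => l /andP [/negbTE -> /negbTE ->].
have -> : lam * p i * f i u + (1 - lam) * p i * f j u = p i * (lam * f i u + (1 - lam) * f j u) by ring.
by [].
Qed.
Lemma Pq01 (R : realType) K N (P : 'I_N -> 'M[R]_K) (q : 'I_K -> R) i s :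
  (forall a, row_stochastic (P a)) -> (forall j, 0 <= q j <= 1) ->
  0 <= Pq P q i s /\ Pq P q i s <= 1.
Proof.
move=> HP Hq; have [P0 P1] := HP i; split.
  apply: sumr_ge0 => j _; apply: mulr_ge0 => //; by case/andP: (Hq j).
rewrite /Pq -(P1 s); apply: ler_sum => j _.
rewrite -[leRHS]mulr1; apply: ler_wpM2l => //; by case/andP: (Hq j).
Qed.

Theorem theorem2 (R : realType) (n m K N : nat)
  (P : 'I_N -> 'M[R]_K) (q : 'I_K -> R)
  (F : 'rV[R]_n -> 'rV[R]_m -> 'rV[R]_n)
  (sigma0 : 'rV[R]_n -> 'rV[R]_m -> R) (sigma1 : 'rV[R]_n -> R)
  (g0 : 'I_N -> 'I_K -> R)
  (HP : forall a, row_stochastic (P a))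
  (Hq : forall j, 0 <= q j <= 1)
  (H0 : forall x s a,
     let f := fun u => Sigma sigma0 sigma1 g0 x s (F x 0) u a in
     continuous f /\ coercive f /\ convex_fun f)
  (H1 : forall x s a,
     let f := fun u => Sigma sigma0 sigma1 g0 x s (F x u) u a in
     continuous f /\ coercive f /\ convex_fun f)
  (x : 'rV[R]_n) (s : 'I_K) (us : 'rV[R]_m) (G : {set 'I_N}) :
  let H := hxs P q F sigma0 sigma1 g0 x s in
  (1 < #|G|)%N ->
  (forall i, i \in G -> forall j, H us j <= H us i) ->
  (forall u, u != us -> exists2 i, i \in G & H us i < H u i) ->
  (forall i, i \in G -> exists u, H u i < H us i) ->
  exists ps : 'I_N -> R, saddle_point H us ps /\ non_pure ps.
Proof.
move=> H cardG hA hB hC.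
pose f k u := H u k - H us k.
have convf : forall k, k \in G -> convex_fun (f k).
  move=> k _.
  have := H1 x s k; move=> /= [_ [_ c1]].
  have := H0 x s k; move=> /= [_ [_ c0]].
  have [a0 a1] := @Pq01 _ _ _ P q k s HP Hq.
  have b0 : 0 <= 1 - Pq P q k s by lra.
  exact: (@conv_comb _ _ _ _ _ _ (- H us k) a0 b0 c1 c0).
have [i0 i0G] : exists i, i \in G.
  by apply/set0Pn; rewrite -cards_eq0 -lt0n; apply: ltn_trans cardG.
have hyp : forall u, exists k, k \in G /\ 0 <= f k u.
  move=> u; have [e|ne] := eqVneq u us.
    by exists i0; split => //; rewrite /f e subrr.
  have [k kG hk] := hB u ne; exists k; split => //; rewrite /f subr_ge0; exact: ltW.
have cG : #|G| = (#|G|.-1).+1 by rewrite prednK // ltnW.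
have [p [p0 [pG [p1 pu]]]] := @key _ _ _ _ G f cG convf hyp.
exists p; split.
  split; first by split.
  split.
    move=> p' [p'0 p'1].
    have EM : expected H p us = H us i0.
      rewrite /expected -[RHS]mul1r -p1 mulr_suml; apply: eq_bigr => k _.
      case: (boolP (k \in G)) => kG; last by rewrite pG // !mul0r.
      congr (_ * _); apply/eqP; rewrite eq_le; apply/andP; split; exact: hA.
    rewrite EM /expected -[leRHS]mul1r -p'1 mulr_suml; apply: ler_sum => k _.
    apply: ler_wpM2l => //; exact: hA.
  move=> u; have := pu u; rewrite /f.
  under eq_bigr do rewrite mulrBr.
  by rewrite sumrB subr_ge0.
apply: contrapT => NP.
have [i pi] : exists i, 0 < p i.
  apply: contrapT => Hn.
  have : \sum_i p i <= 0.
    apply: sumr_le0 => k _; rewrite leNgt; apply/negP => h; apply: Hn; by exists k.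
  rewrite p1; lra.
have pz : forall j, j != i -> p j = 0.
  move=> j ji; apply/eqP; rewrite eq_le p0 andbT leNgt; apply/negP => h.
  apply: NP; exists j, i; split => //.
have E (Fn : 'I_N -> R) : \sum_k p k * Fn k = p i * Fn i.
  rewrite (bigD1 i) //= big1 ?addr0 // => k ki; by rewrite pz // mul0r.
have pi1 : p i = 1.
  have := E (fun _ => 1); under eq_bigr do rewrite mulr1; by rewrite p1 mulr1.
have iG : i \in G.
  apply: contrapT => /negP h; have := pG _ h; lra.
have [u hu] := hC i iG.
have := pu u; rewrite E pi1 mul1r /f; lra.
Qed.
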